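(* There is an absolute constant $C>0$ such that the following holds. Let $G$ be a finite graph with $n$ vertices, and let $\epsilon>0$ satisfy $\epsilon n < n-1$. If $G$ is $\epsilon$-distance-uniform with critical distance $d$, then \[ d \le 2^{C\,\frac{\log n}{\log \epsilon^{-1}}}. \] (In the paper's notation: $d = 2^{O\left(\frac{\log n}{\log \epsilon^{-1}}\right)}$.)
   Context: For a parameter $\epsilon>0$, an $n$-vertex graph $G$ is called $\epsilon$-distance-uniform if there is a value $d$, called the critical distance, such that for every vertex $v$, all but at most $\epsilon n$ of the other vertices are at graph distance exactly $d$ from $v$. The ratio $\frac{\log n}{\log \epsilon^{-1}}$ does not depend on the base of the logarithm. *)

(* Defs.v *)
From mathcomp Require Import all_boot.
From Stdlib Require Import Reals.

Set Implicit Arguments.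
Unset Strict Implicit.
Unset Printing Implicit Defensive.

(* A finite simple graph is a symmetric irreflexive relation e on a finType T. *)

Fixpoint walk_set (T : finType) (e : rel T) (u : T) (k : nat) : {set T} :=
  match k with
  | 0 => [set u]
  | k'.+1 => [set y | [exists x in walk_set e u k', e x y]]
  end.

Definition dist_eq (T : finType) (e : rel T) (u v : T) (d : nat) : bool :=
  (v \in walk_set e u d) && [forall k : 'I_d, v \notin walk_set e u k].

Definition distance_uniform (T : finType) (e : rel T) (eps : R) (d : nat) : Prop :=
  forall v : T,
    (INR #|[set w | (w != v) && ~~ dist_eq e v w d]| <= eps * INR #|T|)%R.

(* Main.v *)
Require Import Defs.
From Stdlib Require Import Reals.
From Stdlib Require Import Lra Lia.

Set Implicit Arguments.
Unset Strict Implicit.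

Section RealPart.
Local Open Scope R_scope.

Lemma ln_le' x y : 0 < x -> x <= y -> ln x <= ln y.
Proof. intros Hx [H|H]; [left; apply ln_increasing; lra | subst; lra]. Qed.

Lemma exp_le' x y : x <= y -> exp x <= exp y.
Proof. intros [H|H]; [left; apply exp_increasing; lra | subst; lra]. Qed.

Lemma le_Rpower2 X y : 0 < X -> ln X <= y * ln 2 -> X <= Rpower 2 y.
Proof. intros HX H. unfold Rpower. rewrite <- (exp_ln X) at 1 by lra. now apply exp_le'. Qed.

Lemma real_part (n s d k : nat) (eps : R) :
  0 < eps -> eps * INR n < INR n - 1 -> INR s <= eps * INR n ->
  (s = 0%nat -> d = 1%nat) -> INR d + 1 <= INR n ->
  (INR n - 1 - INR s) ^ k <= INR n * (INR s + 1) ^ k ->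
  INR d + 1 <= 2 ^ (S k) ->
  INR d <= Rpower 2 (4 * (ln (INR n) / ln (/ eps))).
Proof.
intros Heps Hn Hs Hs0 HdN Ha Hd.
assert (Hn1 : 1 < INR n) by (pose proof (pos_INR n); nra).
assert (Heps1 : eps < 1).
{ destruct (Rlt_or_le eps 1) as [H|H]; auto. nra. }
assert (Hln2 : 0 < ln 2) by (apply Rlt_trans with (/2); [lra | apply ln_lt_2]).
assert (Hlnn : 0 < ln (INR n)) by (rewrite <- ln_1; apply ln_increasing; lra).
assert (Hie : 1 < / eps).
{ rewrite <- Rinv_1. apply Rinv_lt_contravar; lra. }
set (lp := ln (/ eps)).
assert (Hlp : 0 < lp) by (unfold lp; rewrite <- ln_1; apply ln_increasing; lra).
set (L := ln (INR n) / lp).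
assert (HL : ln (INR n) = L * lp) by (unfold L; field; lra).
assert (HL0 : 0 < L) by (unfold L; apply Rdiv_lt_0_compat; lra).
destruct (Nat.eq_dec s 0) as [E|E].
{ rewrite (Hs0 E). simpl. apply le_Rpower2; [lra|]. rewrite ln_1. nra. }
assert (Hs1 : 1 <= INR s).
{ replace 1 with (INR 1) by reflexivity. apply le_INR. lia. }
assert (HepsN : 1 <= eps * INR n) by lra.
assert (HL1 : 1 <= L).
{ assert (lp <= ln (INR n)).
  { unfold lp. apply ln_le'. apply Rinv_0_lt_compat; lra.
    apply Rmult_le_reg_l with eps; [lra|]. rewrite Rinv_r by lra. lra. }
  nra. }
destruct (Rlt_or_le eps (/16)) as [Hsm|Hbig].
-
  assert (Hlp16 : ln 16 <= lp).
  { unfold lp. apply ln_le'; [lra|]. replace 16 with (/ / 16) by (field).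
    apply Rinv_le_contravar; lra. }
  assert (H16 : ln 16 = 2 * ln 4).
  { replace 16 with (4 * 4) by ring. rewrite ln_mult by lra. ring. }
  set (q := / (4 * eps)).
  assert (Hq : 0 < q) by (unfold q; apply Rinv_0_lt_compat; lra).
  assert (Hlq : ln q = lp - ln 4).
  { unfold q, lp. rewrite Rinv_mult. rewrite ln_mult by (apply Rinv_0_lt_compat; lra).
    rewrite ln_Rinv by lra. ring. }
  assert (Hqk : q ^ k <= INR n).
  { assert (H1 : (INR n / 2) ^ k <= INR n * (2 * eps * INR n) ^ k).
    { apply Rle_trans with ((INR n - 1 - INR s) ^ k).
      - apply pow_incr. nra.
      - apply Rle_trans with (1 := Ha). apply Rmult_le_compat_l; [lra|].
        apply pow_incr. lra. }
    replace (INR n / 2) with ((2 * eps * INR n) * q) in H1 by (unfold q; field; lra).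
    rewrite Rpow_mult_distr in H1.
    assert (0 < (2 * eps * INR n) ^ k) by (apply pow_lt; nra).
    nra. }
  assert (Hk : INR k * ln q <= ln (INR n)).
  { rewrite <- ln_pow by lra. apply ln_le'; [apply pow_lt; lra | exact Hqk]. }
  assert (Hk2 : INR k <= 2 * L).
  { assert (INR k * lp <= 2 * L * lp) by nra.
    apply Rmult_le_reg_r with lp; lra. }
  apply Rle_trans with (2 ^ S k); [lra|].
  apply le_Rpower2; [apply pow_lt; lra|].
  rewrite ln_pow by lra. rewrite S_INR. nra.
-
  apply Rle_trans with (INR n); [lra|].
  apply le_Rpower2; [lra|].
  assert (Hlp16 : lp <= ln 16).
  { unfold lp. apply ln_le'. apply Rinv_0_lt_compat; lra.
    apply Rmult_le_reg_l with eps; [lra|]. rewrite Rinv_r by lra. lra. }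
  assert (H16 : ln 16 = 4 * ln 2).
  { replace 16 with (2 * 2 * (2 * 2)) by ring. rewrite !ln_mult by lra. ring. }
  rewrite HL. nra.
Qed.

End RealPart.
From mathcomp Require Import all_boot.
From mathcomp Require Import zify.

Section G.
Variables (T : finType) (e : rel T).
Hypothesis esym : symmetric e.
Notation W := (walk_set e).

Lemma W_S u k x : (x \in W u k.+1) = [exists y in W u k, e y x].
Proof. by rewrite /= inE. Qed.

Lemma W_add u a x b y : x \in W u a -> y \in W x b -> y \in W u (a + b).
Proof.
move=> Hx; elim: b y => [|b IH] y /=; first by rewrite inE addn0 => /eqP->.
rewrite addnS !inE => /existsP[y' /andP[Hy' Hey]].
by apply/existsP; exists y'; rewrite IH.
Qed.

Lemma W_split u a b y : y \in W u (a + b) -> exists2 x, x \in W u a & y \in W x b.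
Proof.
elim: b y => [|b IH] y; first by rewrite addn0 => H; exists y => //=; rewrite inE.
rewrite addnS W_S => /existsP[y' /andP[Hy' Hey]].
have [x Hx Hy'x] := IH _ Hy'.
by exists x => //; rewrite W_S; apply/existsP; exists y'; rewrite Hy'x.
Qed.

Lemma W_sym u k y : y \in W u k -> u \in W y k.
Proof.
elim: k y => [|k IH] y; first by rewrite /= !inE eq_sym.
rewrite W_S => /existsP[y' /andP[Hy' Hey]].
have H1 : y' \in W y 1.
  by rewrite W_S; apply/existsP; exists y; rewrite /= inE eqxx esym.
by have := W_add H1 (IH _ Hy'); rewrite add1n.
Qed.

Definition ball u k : {set T} := [set x | [exists j : 'I_k.+1, x \in W u j]].

Lemma ballP u k x : reflect (exists2 j, j <= k & x \in W u j) (x \in ball u k).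
Proof.
rewrite inE; apply: (iffP existsP) => [[j Hj]|[j Hj Hx]].
  by exists j => //; rewrite -ltnS.
by exists (Ordinal (n:=k.+1) (m:=j) Hj).
Qed.

Lemma ball_self u k : u \in ball u k.
Proof. by apply/ballP; exists 0 => //=; rewrite inE. Qed.

Lemma ball_add u a x b y : x \in ball u a -> y \in ball x b -> y \in ball u (a + b).
Proof.
move=> /ballP[i Hi Hx] /ballP[j Hj Hy]; apply/ballP; exists (i + j).
  exact: leq_add. exact: W_add Hx Hy.
Qed.

Lemma ball_sym u k y : y \in ball u k -> u \in ball y k.
Proof. by move=> /ballP[j Hj Hy]; apply/ballP; exists j => //; apply: W_sym. Qed.

Lemma W_ball u k x : x \in W u k -> x \in ball u k.
Proof. by move=> H; apply/ballP; exists k. Qed.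

Lemma ball_not_dist u x k d : x \in ball u k -> k < d -> ~~ dist_eq e u x d.
Proof.
move=> /ballP[j Hj Hx] Hk; rewrite /dist_eq negb_and; apply/orP; right.
rewrite negb_forall; apply/existsP; exists (Ordinal (leq_ltn_trans Hj Hk)).
by rewrite negbK.
Qed.

Lemma dist_step v w d j : dist_eq e v w d -> j < d ->
  exists2 q, q \in W v j.+1 & q \notin ball v j.
Proof.
move=> /andP[Hw Hall] Hj.
have Hd : d = j.+1 + (d - j.+1) by lia.
move: Hw; rewrite Hd => /W_split[q Hq Hwq].
exists q => //; apply/negP => Hqb.
have : w \in ball v (j + (d - j.+1)) by apply: ball_add Hqb (W_ball Hwq).
move=> /ballP[i Hi Hwi].
have Hid : i < d by lia.
by move/forallP: Hall => /(_ (Ordinal Hid)) /=; rewrite Hwi.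
Qed.

Lemma dist_lt_card v w d : dist_eq e v w d -> d < #|T|.
Proof.
move=> Hd.
suff H : forall j, j <= d -> j < #|ball v j|.
  exact: leq_trans (H d (leqnn d)) (max_card _).
elim=> [|j IH] Hj; first by rewrite card_gt0; apply/set0Pn; exists v; apply: ball_self.
apply: leq_ltn_trans (IH (ltnW Hj)) _; apply: proper_card; apply/properP; split.
  by apply/subsetP => x /ballP[i Hi Hx]; apply/ballP; exists i => //; lia.
have [q Hq Hnq] := dist_step Hd Hj.
by exists q => //; apply: W_ball.
Qed.

Variables (d s : nat).
Definition bad x := [set w | (w != x) && ~~ dist_eq e x w d].
Hypothesis Hs : forall x, #|bad x| <= s.

Lemma notdist_card x : #|[set z | ~~ dist_eq e x z d]| <= s.+1.
Proof.
have H1 : #|[set z | ~~ dist_eq e x z d]| <= #|x |: bad x|.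
  apply: subset_leq_card; apply/subsetP => z; rewrite !inE => Hz.
  by case: eqP => //= /eqP; rewrite eq_sym => ->.
have H2 := cardsU1 x (bad x).
have := Hs x; move: H2; case: (x \in bad x) => /= H2 H; lia.
Qed.

Lemma card_sep (U : finType) (A : {set U}) (P : pred U) :
  #|[set x in A | P x]| = \sum_(x in A) (P x : nat).
Proof.
rewrite -sum1_card [LHS]big_mkcond [RHS]big_mkcond /=; apply: eq_bigr => x _.
by rewrite !inE; case: (x \in A); case: (P x).
Qed.

Lemma grow v r R : r.*2.+1 <= R -> R <= d ->
  exists p, #|ball p r| * (#|T| - 1 - s) <= #|ball v R| * s.+1.
Proof.
move=> HrR HRd.
pose Z := [set z | dist_eq e v z d].
have HZ : #|T| <= #|Z| + s.+1.
  have -> : #|T| = #|[set: T]| by rewrite cardsT.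
  apply: leq_trans (_ : #|Z :|: (v |: bad v)| <= _).
    apply: subset_leq_card; apply/subsetP => z _; rewrite !inE.
    by case: eqP => //= _; case: (dist_eq e v z d).
  have H3 := cardsUI Z (v |: bad v).
  have H2 := cardsU1 v (bad v); have := Hs v; move: H2.
  case: (v \in bad v) => /= H2 H; lia.
case: (set_0Vmem Z) => [Z0|[z0 Hz0]].
  exists v; move: HZ; rewrite Z0 cards0 add0n => H.
  have E : #|T| - 1 - s = 0 by lia.
  rewrite E muln0 //.

pose Bad z := [set x in ball v R | ~~ dist_eq e x z d].
have Hsum : \sum_(z in Z) #|Bad z| <= #|ball v R| * s.+1.
  apply: leq_trans (_ : \sum_z #|Bad z| <= _).
    by rewrite [X in _ <= X](bigID (fun z => z \in Z)) /= leq_addr.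
  under eq_bigr => z _ do rewrite /Bad (card_sep _ (fun x => ~~ dist_eq e x z d)).
  rewrite exchange_big /= -sum_nat_const leq_sum // => x _.
  have := notdist_card x.
  have -> : [set z | ~~ dist_eq e x z d] = [set z in [set: T] | ~~ dist_eq e x z d].
    by apply/setP => z; rewrite !inE.
  rewrite (card_sep _ (fun z => ~~ dist_eq e x z d)).
  by move=> H; apply: leq_trans H; rewrite leq_eqVlt; apply/orP; left; apply/eqP; apply: eq_bigl => i; rewrite inE.
case: (arg_minnP (fun z => #|Bad z|) Hz0) => zm Hzm Hmin.
have Hmul : #|Z| * #|Bad zm| <= #|ball v R| * s.+1.
  apply: leq_trans Hsum; rewrite -sum_nat_const leq_sum // => z Hz; exact: Hmin.
have Hd : dist_eq e v zm d. by have := Hzm : zm \in Z; rewrite inE.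
have Hd' := Hd; move/andP: Hd' => [Hw _].
have Hsplit : d = (R - r) + (d - (R - r)) by lia.
move: Hw; rewrite Hsplit => /W_split[p Hp Hzp].
exists p.
have Hsub : ball p r \subset Bad zm.
  apply/subsetP => x Hx; rewrite inE; apply/andP; split.
    have -> : R = (R - r) + r by lia.
    exact: ball_add (W_ball Hp) Hx.
  apply: (ball_not_dist (k := r + (d - (R - r)))); last by lia.
  apply: ball_sym; rewrite addnC; apply: ball_add (ball_sym (W_ball Hzp)) Hx.
apply: leq_trans Hmul; rewrite mulnC; apply: leq_mul; last exact: subset_leq_card.
lia.
Qed.

Lemma iterate k : 2 ^ k - 1 <= d -> forall v,
  (#|T| - 1 - s) ^ k <= #|ball v (2 ^ k - 1)| * s.+1 ^ k.
Proof.
elim: k => [|k IH] Hk v.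
  by rewrite /= muln1 card_gt0; apply/set0Pn; exists v; apply: ball_self.
have Hk' : 2 ^ k - 1 <= d by rewrite expnS in Hk; lia.
have [|//|p Hp] := grow v (r := 2 ^ k - 1) (R := 2 ^ k.+1 - 1).
  rewrite expnS -addnn; have := expn_gt0 2 k; lia.
have H := IH Hk' p.
set a := #|T| - 1 - s in H Hp *.
set A := #|ball p _| in H Hp.
set B := #|ball v _| in Hp *.
rewrite expnSr; apply: leq_trans (leq_mul H (leqnn a)) _.
rewrite mulnAC; apply: leq_trans (leq_mul Hp (leqnn _)) _.
by rewrite -mulnA -expnS.
Qed.

End G.

From Stdlib Require Import Reals.

Lemma INR_expn m k : INR (expn m k) = pow (INR m) k.
Proof.
elim: k => [|k IH]; first by rewrite expn0.
by rewrite expnS -multE mult_INR IH.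
Qed.

Lemma INR_leq m k : m <= k -> Rle (INR m) (INR k).
Proof. by move/leP; apply: le_INR. Qed.

Theorem theorem1 :
  exists C : R, (0 < C)%R /\
    forall (T : finType) (e : rel T), symmetric e -> irreflexive e ->
    forall (eps : R) (d : nat),
      (0 < eps)%R ->
      (eps * INR #|T| < INR #|T| - 1)%R ->
      distance_uniform e eps d ->
      (INR d <= Rpower 2 (C * (ln (INR #|T|) / ln (/ eps))))%R.
Proof.
exists 4%R; split; first lra.
move=> T e esym irr eps d Heps Hn Hdu.
pose s := \max_(x : T) #|bad e d x|.
have Hs : forall x, #|bad e d x| <= s by move=> x; rewrite /s; exact: (@leq_bigmax T (fun x => #|bad e d x|) x).
have Hn1 : (1 < INR #|T|)%R by (pose proof (pos_INR #|T|); nra).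
have HT : 1 < #|T| by apply/ltP; apply: INR_lt.
have : 0 < #|T| by lia.
move/card_gt0P => [x0 _].
have HsR : (INR s <= eps * INR #|T|)%R.
  rewrite /s (bigmax_eq_arg x0) //; exact: Hdu.
have Hslt : s.+1 < #|T|.
  apply/ltP; apply: INR_lt; rewrite S_INR; lra.
have [w Hw] : exists w, dist_eq e x0 w d.
  case: (boolP [exists w, dist_eq e x0 w d]) => [/existsP //|]; rewrite negb_exists => /forallP Hall; exfalso.
  have : #|[set~ x0]| <= s.
    apply: leq_trans (Hs x0); apply: subset_leq_card; apply/subsetP => z.
    by rewrite !inE => ->; rewrite Hall.
  rewrite cardsC1; lia.
have F1 : d < #|T| := dist_lt_card Hw.
pose k := trunc_log 2 d.+1.
have Hk1 : expn 2 k <= d.+1 by apply: trunc_logP.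
have Hk2 : d.+1 < expn 2 k.+1 by apply: trunc_log_ltn.
have F2 : expn (#|T| - 1 - s) k <= #|T| * expn s.+1 k.
  apply: leq_trans (iterate esym Hs (k := k) _ x0) _; first lia.
  by rewrite leq_mul2r max_card orbT.
have F3 : s = 0 -> d = 1.
  move=> s0.
  have Hgood : forall y, y != x0 -> dist_eq e x0 y d.
    move=> y Hy; have : y \notin bad e d x0.
      by apply/negP => Hb; have := Hs x0; rewrite s0 leqn0 cards_eq0 => /eqP E; rewrite E inE in Hb.
    by rewrite inE Hy /= negbK.
  have : 0 < #|[set~ x0]| by rewrite cardsC1; lia.
  move/card_gt0P => [y]; rewrite !inE => Hy.
  have Hyd := Hgood y Hy.
  case: (ltngtP d 1) => // Hd1.
    have d0 : d = 0 by lia.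
    by move: Hyd => /andP[]; rewrite d0 /= inE (negbTE Hy).
  have [q Hq Hnq] := dist_step Hyd (ltn_trans (ltn0Sn 0) Hd1).
  have Hqv : q != x0 by apply: contraNneq Hnq => ->; apply: ball_self.
  move: (Hgood q Hqv) => /andP[_ /forallP /(_ (Ordinal Hd1))] /=.
  by rewrite Hq.
apply: (real_part (s := s) (k := k)) => //.
- by rewrite -S_INR; apply: INR_leq.
- have E : INR (#|T| - 1 - s) = (INR #|T| - 1 - INR s)%R.
    have E1 : #|T| = (#|T| - 1 - s) + s + 1 by lia.
    rewrite [in RHS]E1 -!plusE !plus_INR /=; ring.
  rewrite -E -S_INR -!INR_expn -mult_INR multE; exact: INR_leq.
- have H2 : INR 2 = 2%R by rewrite !S_INR /=; lra.
  have := INR_leq (ltnW Hk2); rewrite INR_expn H2 S_INR; exact.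
Qed.
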